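(* Let $M$ be a manifold with a Randers metric $Z$ having Zermelo data $(h,W)$, and let $f:U\subset M\to\mathbb{R}$ be a smooth function without critical points on the open set $U$. Let $\nabla f$ and $\widetilde{\nabla} f$ denote the gradients of $f$ with respect to $Z$ and $h$ respectively, and write $\|v\|=\sqrt{h(v,v)}$. Then on $U$: (a) $\dfrac{\|\widetilde{\nabla} f\|}{Z(\nabla f)}\big(\nabla f-Z(\nabla f)W\big)=\widetilde{\nabla} f$; (b) $Z(\nabla f)=\|\widetilde{\nabla} f\|+df(W)$.
   Context: Given a Riemannian metric $h$ on $M$ and a smooth vector field $W$ with $h(W,W)<1$, the Randers metric $Z:TM\to[0,\infty)$ with Zermelo data $(h,W)$ is defined for $v\neq0$ as the solution $Z(v)>0$ of $h\big(\frac{v}{Z(v)}-W,\frac{v}{Z(v)}-W\big)=1$ (and $Z(0)=0$); it is a Finsler metric. For a Finsler metric $F$ with fundamental tensor $g_v(u,w)=\frac12\frac{\partial^2}{\partial t\partial s}F^2(v+tu+sw)|_{t=s=0}$, the gradient $\nabla f$ of $f$ at a non-critical point is the unique vector with $df(\cdot)=g_{\nabla f}(\nabla f,\cdot)$; for a Riemannian metric this is the usual gradient. *)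

(* Defs.v *)
From HB Require Import structures.
From mathcomp Require Import all_boot all_order all_algebra.
From mathcomp Require Import all_classical all_reals all_analysis.
Set Implicit Arguments. Unset Strict Implicit. Unset Printing Implicit Defensive.
Import Order.TTheory GRing.Theory Num.Theory.
Local Open Scope ring_scope.

(* Pointwise model: the tangent space T_pM is 'rV[R]_n; the Riemannian
   metric h at p is given by a Gram matrix H. *)
Definition hdot (R : realType) (n : nat) (H : 'M[R]_n) (u w : 'rV[R]_n) : R :=
  (u *m H *m w^T) 0 0.

Definition hnorm (R : realType) (n : nat) (H : 'M[R]_n) (v : 'rV[R]_n) : R :=
  Num.sqrt (hdot H v v).

Definition riemannian (R : realType) (n : nat) (H : 'M[R]_n) : Prop :=
  H^T = H /\ forall v : 'rV[R]_n, v != 0 -> 0 < hdot H v v.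

Definition randersZ (R : realType) (n : nat) (H : 'M[R]_n) (W : 'rV[R]_n)
    (v : 'rV[R]_n) : R :=
  if v == 0 then 0
  else xget 0 [set z : R | 0 < z /\ hdot H (z^-1 *: v - W) (z^-1 *: v - W) = 1].

Definition fund_tensor (R : realType) (n : nat) (F : 'rV[R]_n -> R)
    (v u w : 'rV[R]_n) : R :=
  2^-1 * derive1 (fun t : R =>
           derive1 (fun s : R => (F (v + t *: u + s *: w)) ^+ 2) 0) 0.

Definition dfun (R : realType) (n : nat) (c : 'cV[R]_n) (u : 'rV[R]_n) : R :=
  (u *m c) 0 0.

Definition is_finsler_gradient (R : realType) (n : nat) (F : 'rV[R]_n -> R)
    (c : 'cV[R]_n) (G : 'rV[R]_n) : Prop :=
  forall u : 'rV[R]_n, dfun c u = fund_tensor F G G u.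

Definition is_riem_gradient (R : realType) (n : nat) (H : 'M[R]_n)
    (c : 'cV[R]_n) (Gt : 'rV[R]_n) : Prop :=
  forall u : 'rV[R]_n, dfun c u = hdot H Gt u.

(* Main.v *)
Require Import Defs.
From mathcomp Require Import all_boot all_order all_algebra.
From mathcomp Require Import all_classical all_reals all_analysis.
From mathcomp Require Import ring lra.
Import Order.TTheory GRing.Theory Num.Theory.
Local Open Scope classical_set_scope.
Local Open Scope ring_scope.

Section H.
Context {R : realType} {n : nat} (H : 'M[R]_n).

Lemma hdotDl u v w : hdot H (u + v) w = hdot H u w + hdot H v w.
Proof. by rewrite /hdot !mulmxDl mxE. Qed.
Lemma hdotZl k u w : hdot H (k *: u) w = k * hdot H u w.
Proof. by rewrite /hdot -!scalemxAl mxE. Qed.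
Lemma hdotDr u v w : hdot H u (v + w) = hdot H u v + hdot H u w.
Proof. by rewrite /hdot linearD /= mulmxDr mxE. Qed.
Lemma hdotZr k u w : hdot H u (k *: w) = k * hdot H u w.
Proof. by rewrite /hdot linearZ /= -scalemxAr mxE. Qed.
Lemma hdotNl u w : hdot H (- u) w = - hdot H u w.
Proof. by rewrite -scaleN1r hdotZl mulN1r. Qed.
Lemma hdotNr u w : hdot H u (- w) = - hdot H u w.
Proof. by rewrite -scaleN1r hdotZr mulN1r. Qed.
Lemma hdot0l w : hdot H 0 w = 0.
Proof. by rewrite -(scale0r 0) hdotZl mul0r. Qed.
Lemma hdotC : H^T = H -> forall u w, hdot H u w = hdot H w u.
Proof.
move=> hs u w; rewrite /hdot.
have -> : (u *m H *m w^T) 0 0 = ((u *m H *m w^T)^T) 0 0 by rewrite [RHS]mxE.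
by rewrite !trmx_mul trmxK hs mulmxA.
Qed.
End H.

Definition Zf {R : realType} (l a b : R) := (- a + Num.sqrt (a ^+ 2 + l * b)) / l.

Lemma Zf_pos {R : realType} (l a b : R) : 0 < l -> 0 < b -> 0 < Zf l a b.
Proof.
move=> l0 b0; rewrite /Zf divr_gt0 // addrC subr_gt0.
have h : a ^+ 2 < a ^+ 2 + l * b by rewrite ltrDl mulr_gt0.
case: (lerP a 0) => ha; first by apply: (le_lt_trans ha); rewrite sqrtr_gt0 (le_lt_trans _ h) // sqr_ge0.
by rewrite -[X in X < _](gtr0_norm ha) -sqrtr_sqr ltr_sqrt // (le_lt_trans _ h) // sqr_ge0.
Qed.

Lemma hdot_exp {R : realType} {n : nat} (H : 'M[R]_n) (k : R) (v W : 'rV[R]_n) :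
  H^T = H ->
  hdot H (k *: v - W) (k *: v - W) =
  k ^+ 2 * hdot H v v - 2 * k * hdot H v W + hdot H W W.
Proof.
move=> hs; rewrite !(hdotDl, hdotDr, hdotZl, hdotZr, hdotNl, hdotNr) (hdotC H hs W v).
ring.
Qed.

Lemma Zformula {R : realType} {n : nat} (H : 'M[R]_n) (W v : 'rV[R]_n) :
  riemannian H -> hdot H W W < 1 ->
  randersZ H W v = Zf (1 - hdot H W W) (hdot H v W) (hdot H v v).
Proof.
move=> [hs hpd] hW; set l := 1 - hdot H W W.
have l0 : 0 < l by rewrite subr_gt0.
rewrite /randersZ; case: eqP => [->|/eqP v0].
  by rewrite !hdot0l /Zf expr0n /= mulr0 !addr0 sqrtr0 oppr0 addr0 mul0r.
set a := hdot H v W; set b := hdot H v v.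
have b0 : 0 < b by exact: hpd.
set z0 := Zf l a b.
have z0p : 0 < z0 by exact: Zf_pos.
set S := Num.sqrt (a ^+ 2 + l * b).
have S2 : S ^+ 2 = a ^+ 2 + l * b.
  by rewrite sqr_sqrtr // addr_ge0 ?sqr_ge0 // mulr_ge0 // ltW.
have Sa : - a < S.
  have h : a ^+ 2 < a ^+ 2 + l * b by rewrite ltrDl mulr_gt0.
  apply: (@le_lt_trans _ _ `|a|); first by rewrite -normrN ler_norm.
  by rewrite -sqrtr_sqr ltr_sqrt // (le_lt_trans _ h) // sqr_ge0.
have ez0 : l * z0 = S - a by rewrite /z0 /Zf -/S mulrC mulfVK ?gt_eqF // addrC.
have q0 : l * z0 ^+ 2 + 2 * a * z0 = b.
  apply: (mulfI (lt0r_neq0 l0)).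
  have -> : l * (l * z0 ^+ 2 + 2 * a * z0) = (l * z0) ^+ 2 + 2 * a * (l * z0) by ring.
  rewrite ez0; have : S ^+ 2 = a ^+ 2 + l * b := S2; nra.
set P := [set z : R | 0 < z /\ hdot H (z^-1 *: v - W) (z^-1 *: v - W) = 1].
have Pz0 : P z0.
  split => //; rewrite hdot_exp // -/a -/b.
  have zn : z0 != 0 by rewrite gt_eqF.
  by apply: (mulfI (expf_neq0 2 zn)); rewrite mulr1 -q0 /l; field.
have [zp hz] := xgetPex 0 (ex_intro _ z0 Pz0).
move: (xget 0 P) zp hz => z zp; rewrite hdot_exp // -/a -/b => hz.
have zn : z != 0 by rewrite gt_eqF.
have qz : l * z ^+ 2 + 2 * a * z = b.
  have e : z ^+ 2 * (z^-1 ^+ 2 * b - 2 * z^-1 * a + hdot H W W) =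
            b - 2 * a * z + hdot H W W * z ^+ 2 by field.
  rewrite hz mulr1 in e; rewrite /l; nra.
have : (z - z0) * (l * (z + z0) + 2 * a) = 0.
  have -> : (z - z0) * (l * (z + z0) + 2 * a) = (l * z ^+ 2 + 2 * a * z) - (l * z0 ^+ 2 + 2 * a * z0) by ring.
  by rewrite qz q0 subrr.
move/eqP; rewrite mulf_eq0 => /orP [/eqP h|/eqP h]; first by apply/eqP; rewrite -subr_eq0 h.
exfalso; move: h; have : l * z > 0 by rewrite mulr_gt0.
have -> : l * (z + z0) + 2 * a = l * z + (S + a) by rewrite mulrDr ez0; ring.
move=> lz; apply/eqP; rewrite gt_eqF //; lra.
Qed.
Lemma is_derive_sqrt_comp {R : realType} {f : R -> R} {x df : R} :
  is_derive x 1 f df -> 0 < f x ->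
  is_derive x 1 (fun s => Num.sqrt (f s)) (df / (2 * Num.sqrt (f x))).
Proof.
move=> hf fx0.
have hs := is_derive1_sqrt fx0.
have d1 : derivable f x 1 by case: hf.
have d2 : derivable (@Num.sqrt R : R -> R) (f x) 1 by case: hs.
have dc : derivable ((@Num.sqrt R : R -> R) \o f) x 1.
  apply/derivable1_diffP; apply: differentiable_comp; exact/derivable1_diffP.
split; first exact: dc.
rewrite -derive1E (derive1_comp d1 d2) !derive1E !derive_val.
by rewrite mulrC.
Qed.
Lemma deriv_key (R : realType) (l a0 a1 b0 p b2 : R) : 0 < l -> 0 < a0 ^+ 2 + l * b0 ->
  derive1 (fun s => Zf l (a0 + s * a1) (b0 + 2 * s * p + s ^+ 2 * b2) ^+ 2) 0 =
  2 * Zf l a0 b0 * ((- a1 + (a0 * a1 + l * p) / Num.sqrt (a0 ^+ 2 + l * b0)) / l).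
Proof.
move=> l0 q0.
pose q := fun s : R => (a0 + s * a1) ^+ 2 + l * (b0 + 2 * s * p + s ^+ 2 * b2).
have hq : is_derive (0:R) 1 q (2 * a0 * a1 + l * (2 * p)).
  apply: is_derive_eq.
  rewrite !(scale0r, scaler0, mul0r, add0r, addr0, mul1r, expr0n) /=.
  by rewrite -![_ *: _]/(_ * _); ring.
have qe : q 0 = a0 ^+ 2 + l * b0 by rewrite /q; ring.
have q0' : 0 < q 0 by rewrite qe.
have hs := is_derive_sqrt_comp hq q0'.
have -> : (fun s => Zf l (a0 + s * a1) (b0 + 2 * s * p + s ^+ 2 * b2) ^+ 2) =
   (fun s => ((- (a0 + s * a1) + Num.sqrt (q s)) / l) ^+ 2) by [].
rewrite derive1E.
have hz : is_derive (0:R) 1 (fun s => ((- (a0 + s * a1) + Num.sqrt (q s)) / l) ^+ 2)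
   (2 * Zf l a0 b0 * ((- a1 + (a0 * a1 + l * p) / Num.sqrt (a0 ^+ 2 + l * b0)) / l)).
  apply: is_derive_eq.
  rewrite qe !(scale0r, scaler0, mul0r, add0r, addr0, mul1r, expr0n) /=.
  rewrite -![_ *: _]/(_ * _) /Zf.
  have sn : Num.sqrt (a0 ^+ 2 + l * b0) != 0 by rewrite sqrtr_eq0 -ltNge.
  have ln : l != 0 by rewrite gt_eqF.
  have n2 : (2:R) != 0 by rewrite pnatr_eq0.
  by field; rewrite ln sn.
by case: hz.
Qed.
Lemma deriv_affine_near {R : realType} (f : R -> R) (K : R) :
  (forall t, -1 < t -> f t = (1 + t) * K) -> derive1 f 0 = K.
Proof.
move=> hf; rewrite derive1E.
have hn : \forall t \near (0:R^o), f t = (1 + t) * K.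
  exists 1 => //= t; rewrite /ball /= sub0r normrN => /ltr_normlP [h1 h2].
  by apply: hf; rewrite -(opprK t) ltrN2.
rewrite (near_eq_derive _ hn).
have hd : is_derive (0:R) 1 (fun t : R => (1 + t) * K) K.
  apply: is_derive_eq.
  by rewrite scaler0 add0r -[_ *: _]/(_ * _); ring.
by case: hd.
Qed.

Lemma fund_G {R : realType} {n : nat} (H : 'M[R]_n) (W G u : 'rV[R]_n) :
  riemannian H -> hdot H W W < 1 -> G != 0 ->
  fund_tensor (randersZ H W) G G u =
  Zf (1 - hdot H W W) (hdot H G W) (hdot H G G) *
  ((- hdot H u W + (hdot H G W * hdot H u W + (1 - hdot H W W) * hdot H G u)
     / Num.sqrt (hdot H G W ^+ 2 + (1 - hdot H W W) * hdot H G G)) / (1 - hdot H W W)).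
Proof.
move=> hR hW G0; have [hs hpd] := hR.
set l := 1 - hdot H W W; set a0 := hdot H G W; set b0 := hdot H G G.
set a1 := hdot H u W; set p := hdot H G u; set b2 := hdot H u u.
set S := Num.sqrt (a0 ^+ 2 + l * b0).
have l0 : 0 < l by rewrite subr_gt0.
have b00 : 0 < b0 by exact: hpd.
have q0 : 0 < a0 ^+ 2 + l * b0 by rewrite ltr_pwDr ?mulr_gt0 ?sqr_ge0.
have S0 : 0 < S by rewrite sqrtr_gt0.
set X := (- a1 + (a0 * a1 + l * p) / S) / l.
rewrite /fund_tensor (@deriv_affine_near _ _ (2 * Zf l a0 b0 * X)).
  have n2 : (2:R) != 0 by rewrite pnatr_eq0.
  by field.
move=> t ht; set k := 1 + t.
have k0 : 0 < k by rewrite /k -ltrBlDl sub0r.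
have -> : (fun s => randersZ H W (G + t *: G + s *: u) ^+ 2) =
  (fun s => Zf l (k * a0 + s * a1) (k ^+ 2 * b0 + 2 * s * (k * p) + s ^+ 2 * b2) ^+ 2).
  apply: funext => s; rewrite Zformula //; congr (Zf _ _ _ ^+ 2).
    by rewrite !(hdotDl, hdotZl) -/a0 -/a1 /k; ring.
  rewrite !(hdotDl, hdotDr, hdotZl, hdotZr) -/a0 -/b0 -/p -/b2 (hdotC H hs u G) -/p /k; ring.
have ek : (k * a0) ^+ 2 + l * (k ^+ 2 * b0) = k ^+ 2 * (a0 ^+ 2 + l * b0) by ring.
rewrite deriv_key //; last by rewrite ek mulr_gt0 // exprn_gt0.
rewrite /Zf ek sqrtrM ?sqr_ge0 // sqrtr_sqr gtr0_norm // -/S /X.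
have kn : k != 0 by rewrite gt_eqF.
have Sn : S != 0 by rewrite gt_eqF.
have ln : l != 0 by rewrite gt_eqF.
by field; rewrite ln Sn kn.
Qed.

Lemma Zf_quad {R : realType} (l a b : R) : 0 < l -> 0 <= a ^+ 2 + l * b ->
  l * Zf l a b ^+ 2 + 2 * a * Zf l a b = b.
Proof.
move=> l0 q0; apply: (mulfI (lt0r_neq0 l0)).
have ez : l * Zf l a b = Num.sqrt (a ^+ 2 + l * b) - a.
  by rewrite /Zf mulrC mulfVK ?gt_eqF // addrC.
have -> : l * (l * Zf l a b ^+ 2 + 2 * a * Zf l a b) =
  (l * Zf l a b) ^+ 2 + 2 * a * (l * Zf l a b) by ring.
rewrite ez; have := sqr_sqrtr q0; set S := Num.sqrt _ => hS.
have -> : (S - a) ^+ 2 + 2 * a * (S - a) = S ^+ 2 - a ^+ 2 by ring.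
by rewrite hS; ring.
Qed.

Lemma nondeg {R : realType} {n : nat} {H : 'M[R]_n} {x y : 'rV[R]_n} :
  riemannian H -> (forall u, hdot H x u = hdot H y u) -> x = y.
Proof.
move=> [hs hpd] h; apply/eqP; rewrite -subr_eq0; apply/negPn/negP => nz.
have := hpd _ nz; rewrite hdotDl hdotNl h subrr.
by rewrite ltxx.
Qed.

Lemma fund_zero {R : realType} {n : nat} (F : 'rV[R]_n -> R) u : fund_tensor F 0 0 u = 0.
Proof.
rewrite /fund_tensor.
have e : forall t : R, derive1 (fun s => F (0 + t *: 0 + s *: u) ^+ 2) 0 =
   derive1 (fun s => F (s *: u) ^+ 2) 0.
  move=> t; congr (derive1 _ _); apply: funext => s; by rewrite scaler0 !add0r.
rewrite (funext e).
by rewrite derive1_cst mulr0.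
Qed.
Theorem lemma3p1 (R : realType) (n : nat) (H : 'M[R]_n) (W : 'rV[R]_n)
    (c : 'cV[R]_n) (G Gt : 'rV[R]_n) :
  riemannian H ->
  hdot H W W < 1 ->
  c != 0 ->
  is_finsler_gradient (randersZ H W) c G ->
  is_riem_gradient H c Gt ->
  (hnorm H Gt / randersZ H W G) *: (G - randersZ H W G *: W) = Gt /\
  randersZ H W G = hnorm H Gt + dfun c W.
Proof.
move=> hR hW _ hF hGt; have [hs hpd] := hR.
have [G0|G0] := eqVneq G 0.
  subst G.
  have Gt0 : Gt = 0.
    apply: (@nondeg _ _ H Gt 0 hR) => u.
    by rewrite -hGt hF fund_zero hdot0l.
  subst Gt.
  rewrite /randersZ eqxx /hnorm hdot0l sqrtr0 mul0r scale0r; split => //.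
  by rewrite hGt hdot0l addr0.
set w := hdot H W W; set a0 := hdot H G W; set b0 := hdot H G G.
set S := Num.sqrt (a0 ^+ 2 + (1 - w) * b0).
have l0 : 0 < 1 - w by rewrite subr_gt0.
have b00 : 0 < b0 by exact: hpd.
have q0 : 0 < a0 ^+ 2 + (1 - w) * b0 by rewrite ltr_pwDr ?mulr_gt0 ?sqr_ge0.
have S0 : 0 < S by rewrite sqrtr_gt0.
set Z := randersZ H W G.
have eZ : Z = Zf (1 - w) a0 b0 by rewrite /Z Zformula.
have Z0 : 0 < Z by rewrite eZ Zf_pos.
have qZ : (1 - w) * Z ^+ 2 + 2 * a0 * Z = b0 by rewrite eZ Zf_quad // ltW.
have Sn : S != 0 by rewrite gt_eqF.
have Zn : Z != 0 by rewrite gt_eqF.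
have ln : 1 - w != 0 by rewrite gt_eqF.
have hGt' : Gt = (Z / S) *: (G - Z *: W).
  apply: (@nondeg _ _ H Gt _ hR) => u; rewrite -hGt hF fund_G // -/w -/a0 -/b0 -/S -eZ.
  rewrite !(hdotZl, hdotDl, hdotNl) (hdotC H hs W u).
  rewrite eZ /Zf -/S; move: (hdot H u W) (hdot H G u) => x y.
  clearbody w a0 S; by field; rewrite ln Sn.
have E : hdot H (G - Z *: W) (G - Z *: W) = Z ^+ 2.
  rewrite !(hdotDl, hdotDr, hdotNl, hdotNr, hdotZl, hdotZr) (hdotC H hs W G) -/w -/a0 -/b0.
  rewrite -qZ; clearbody w a0 b0 Z; ring.
have hn : hnorm H Gt = Z ^+ 2 / S.
  rewrite /hnorm hGt' hdotZl hdotZr E.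
  have -> : Z / S * (Z / S * Z ^+ 2) = (Z ^+ 2 / S) ^+ 2.
    by clearbody S Z; field.
  by rewrite sqrtr_sqr gtr0_norm // divr_gt0 // exprn_gt0.
split.
  by rewrite hn hGt'; congr (_ *: _); clearbody S Z; field; rewrite Sn Zn.
rewrite hn hGt hGt' !(hdotZl, hdotDl, hdotNl) -/w -/a0.
rewrite eZ /Zf -/S.
by clearbody w a0 S; field; rewrite ln Sn.
Qed.
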